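(* Let $F$ be a Ferrers diagram, $T\in\mathsf{EWtab}(F)$, $S=S(T)$, and let $(j,k)$ be a cell of $F$ ($j\in\mathsf{rows}(F)$, $k\in\mathsf{cols}(F)$). Then $T_{jk}$ is a cornersupport in $T$ if and only if there exists a cell $(j',k')$ of $F$ with $j'\ne j$, $k'\ne k$ such that: when $T_{jk}=0$, we have $T_{j'k'}=1$, $T_{jk'}=0$ (with $(j,k')$ a cell of $F$) and $S_{j'k}=0$; when $T_{jk}=1$, we have $T_{j'k'}=0$, $T_{j'k}=1$ (with $(j',k)$ a cell of $F$) and $S_{jk'}=1$.
   Context: Ferrers diagrams and graphs: a Ferrers diagram $F$ (English convention) of semiperimeter $n+1$ has rows and columns labeled by $0,\ldots,n$: the $n+1$ unit steps of its south-east boundary path, traversed from top-right to bottom-left, are labeled $0,\ldots,n$; a vertical step labels the row it bounds, a horizontal step the column it bounds (top row labeled $0$). $\mathsf{rows}(F)$, $\mathsf{cols}(F)$ are the label sets; $F$ has a cell in row $i$, column $j$ iff $i<j$. $G(F)$ has vertex set $\{0,\ldots,n\}$ with edges $\{i,j\}$ for $i\in\mathsf{rows}(F)$, $j\in\mathsf{cols}(F)$, $i<j$. Sandpile model on $G(F)$ with sink $0$: configurations $c\in\mathbb{N}^n$; non-sink $v$ unstable if $c_v\ge\deg(v)$; toppling sends one grain to each neighbour (grains to $0$ disappear); toppling the sink adds one grain to each neighbour of $0$. Canonical toppling of a recurrent configuration $c$: topple the sink ($U^{(0)}_c=\{0\}$), then alternately topple simultaneously all unstable vertices in $\mathsf{cols}(F)$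 ($V^{(1)}_c$), all unstable in $\mathsf{rows}(F)$ ($U^{(1)}_c$), etc.; $\mathsf{CanonTop}(c)=(U^{(0)}_c,V^{(1)}_c,U^{(1)}_c,\ldots)$ is an ordered partition of $\{0,\ldots,n\}$. EW-tableaux: $0/1$-fillings $T$ of $F$ ($T_{ij}$ = entry in row $i$, column $j$) with top row all 1s, a 0 in every other row, and no rectangle with 0s in two diagonally opposite corners and 1s in the other two; $\mathsf{EWtab}(F)$ is their set. $\phi_{TC}(T)$ is the (recurrent) configuration with $c_i$ = number of 1s in row $i$ ($i\in\mathsf{rows}(F)$), $c_i$ = number of 0s in column $i$ ($i\in\mathsf{cols}(F)$). $\mathsf{CanonTop}(T):=\mathsf{CanonTop}(\phi_{TC}(T))$. Supplementary tableau $S=S(T)$: the $|\mathsf{rows}(F)|\times|\mathsf{cols}(F)|$ array with $S_{ij}=1$ if row label $i$ lies in an earlier block of $\mathsf{CanonTop}(T)$ than column label $j$, else $0$ (it agrees with $T$ on cells of $F$). An entry $x$ of $T$ at $(j,k)$ is a cornersupport entry (the cell is a cornersupport) iff there exist a row $j'\ne j$ and column $k'\ne k$ with $S_{j'k'}\ne x$ and $S_{j'k}=S_{jk'}=x$. *)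

(* Defs.v *)
From mathcomp Require Import all_boot.
Set Implicit Arguments. Unset Strict Implicit. Unset Printing Implicit Defensive.

(* A Ferrers diagram F of semiperimeter n+1 is encoded by its labelling:
   [r : 'I_n.+1 -> bool], [r i = true] iff label i is a row label
   (a vertical step of the boundary path), otherwise a column label. *)

Section Ferrers.
Variable n : nat.
Variable r : 'I_n.+1 -> bool.

(* The boundary path starts with a vertical step (top row labelled 0)
   and ends with a horizontal step (so every row / column is nonempty). *)
Definition isFerrers : bool := r ord0 && ~~ r ord_max.

Definition isRow (i : 'I_n.+1) : bool := r i.
Definition isCol (j : 'I_n.+1) : bool := ~~ r j.

Definition cell (i j : 'I_n.+1) : bool := [&& r i, ~~ r j & i < j].

Definition adj (u v : 'I_n.+1) : bool := cell u v || cell v u.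
Definition deg (v : 'I_n.+1) : nat := #|[set u | adj v u]|.

(* configurations: values at the sink ord0 are irrelevant *)
Definition config := 'I_n.+1 -> nat.

Definition topple_set (A : {set 'I_n.+1}) (c : config) : config :=
  fun u => (c u - (if u \in A then deg u else 0)) + #|[set v in A | adj v u]|.

(* block toppled at step t of the canonical toppling, given the current
   configuration c': step 0 = the sink; odd steps = unstable columns;
   even steps >= 2 = unstable (non-sink) rows. *)
Definition blk_of (t : nat) (c' : config) : {set 'I_n.+1} :=
  if t == 0 then [set ord0]
  else [set v | [&& v != ord0, odd t == ~~ r v & deg v <= c' v]].

Fixpoint cfg (c : config) (t : nat) : config :=
  match t with
  | 0 => c
  | t'.+1 => topple_set (blk_of t' (cfg c t')) (cfg c t')
  end.

Definition blk (c : config) (t : nat) : {set 'I_n.+1} := blk_of t (cfg c t).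

(* index of the block of CanonTop(c) containing v (first step at which v
   topples; for recurrent c every vertex topples exactly once within
   n+1 steps, so the bound 2*(n+2) is harmless). *)
Definition topTime (c : config) (v : 'I_n.+1) : nat :=
  find (fun t => v \in blk c t) (iota 0 (2 * n.+2)).

(* 0/1 fillings: T i j is the entry in row i, column j (only meaningful
   on cells). *)
Definition filling := 'I_n.+1 -> 'I_n.+1 -> bool.

Definition isEWtab (T : filling) : Prop :=
  [/\ (forall j, cell ord0 j -> T ord0 j),
      (forall i, isRow i -> i != ord0 -> exists j, cell i j && ~~ T i j) &
      (forall i i' j j', cell i j -> cell i j' -> cell i' j -> cell i' j' ->
         i != i' -> j != j' ->
         ~ [/\ T i j = false, T i' j' = false, T i j' = true & T i' j = true])].

Definition phiTC (T : filling) : config := fun i =>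
  if r i then #|[set j | cell i j && T i j]|
  else #|[set k | cell k i && ~~ T k i]|.

Definition suppl (T : filling) (i j : 'I_n.+1) : bool :=
  topTime (phiTC T) i < topTime (phiTC T) j.

Definition cornersupport (T : filling) (j k : 'I_n.+1) : Prop :=
  exists j' k', [/\ isRow j', isCol k', j' != j & k' != k] /\
    [/\ suppl T j' k' != T j k, suppl T j' k = T j k & suppl T j k' = T j k].

End Ferrers.

(* Main.v *)
Require Import Defs.
From mathcomp Require Import all_boot zify.
Set Implicit Arguments. Unset Strict Implicit. Unset Printing Implicit Defensive.

Section Pf.
Variables (n : nat) (r : 'I_n.+1 -> bool) (T : filling n).
Hypothesis HF : isFerrers r.
Hypothesis HEW : isEWtab r T.

Let c := phiTC r T.
Let N := 2 * n.+2.

Lemma cellE i j : cell r i j = [&& r i, ~~ r j & i < j].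
Proof. by []. Qed.

Lemma r0 : r ord0.
Proof. by case/andP: HF. Qed.

Lemma adj_row i v : r i -> adj r v i = cell r i v.
Proof. by move=> ri; rewrite /adj !cellE ri /= andbF. Qed.

Lemma adj_col j v : ~~ r j -> adj r v j = cell r v j.
Proof. by move=> rj; rewrite /adj !cellE (negbTE rj) /= orbF. Qed.

Lemma deg_row i : r i -> deg r i = #|[set u | cell r i u]|.
Proof.
move=> ri; rewrite /deg; apply: eq_card => u; rewrite !inE /adj.
by rewrite [cell r u i]cellE ri /= andbF orbF.
Qed.

Lemma deg_col j : ~~ r j -> deg r j = #|[set u | cell r u j]|.
Proof.
move=> rj; rewrite /deg; apply: eq_card => u; rewrite !inE /adj.
by rewrite [cell r j u]cellE (negbTE rj) /=.
Qed.

Lemma c_row i : r i -> c i = #|[set j | cell r i j && T i j]|.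
Proof. by move=> ri; rewrite /c /phiTC ri. Qed.

Lemma c_col j : ~~ r j -> c j = #|[set k | cell r k j && ~~ T k j]|.
Proof. by move=> rj; rewrite /c /phiTC (negbTE rj). Qed.

Lemma cell0 j : ~~ r j -> cell r ord0 j.
Proof.
move=> rj; rewrite cellE r0 rj /=; case: (posnP j) => // j0.
have: j = ord0 by apply: val_inj.
by move=> ej; move: rj; rewrite ej r0.
Qed.

Lemma c_lt_deg v : v != ord0 -> c v < deg r v.
Proof.
move=> v0; case rv: (r v).
- rewrite c_row // deg_row //; case: HEW => _ H2 _.
  have [j /andP [cj Tj]] := H2 v rv v0.
  apply: proper_card; rewrite properE; apply/andP; split.
    by apply/subsetP => u; rewrite !inE => /andP [].
  apply/subsetPn; exists j; first by rewrite inE.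
  by rewrite inE cj (negbTE Tj).
- have rv' : ~~ r v by rewrite rv.
  rewrite c_col // deg_col //; case: HEW => H1 _ _.
  apply: proper_card; rewrite properE; apply/andP; split.
    by apply/subsetP => u; rewrite !inE => /andP [].
  apply/subsetPn; exists ord0; first by rewrite inE cell0.
  by rewrite inE cell0 //= H1 // cell0.
Qed.

Definition D t := [set v | has (fun s => v \in blk r c s) (iota 0 t)].

Lemma D0 : D 0 = set0.
Proof. by apply/setP => v; rewrite !inE. Qed.

Lemma DS t : D t.+1 = D t :|: blk r c t.
Proof.
apply/setP => v; rewrite !inE; have -> : iota 0 t.+1 = iota 0 t ++ [:: t].
  by rewrite -addn1 iotaD add0n.
by rewrite has_cat /= orbF.
Qed.

Lemma D_sub t s : t <= s -> D t \subset D s.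
Proof.
move=> /subnKC <-; elim: (s - t) => [|k IH]; first by rewrite addn0.
rewrite addnS DS; apply: subset_trans IH _; exact: subsetUl.
Qed.

Lemma blk_par v s : v \in blk r c s ->
  ((s == 0) && (v == ord0)) || [&& 0 < s, v != ord0 & odd s == ~~ r v].
Proof.
rewrite /blk /blk_of; case: s => [|s] /=; rewrite !inE //=.
  by move=> ->.
by case/and3P => -> ->.
Qed.

Lemma blk_unst v s : 0 < s -> (v \in blk r c s) = [&& v != ord0, odd s == ~~ r v & deg r v <= cfg r c s v].
Proof. by rewrite /blk /blk_of; case: s => [|s] //= _; rewrite inE. Qed.

Lemma blk0 : blk r c 0 = [set ord0].
Proof. by []. Qed.

Definition Inv t :=
  (forall u, u != ord0 -> cfg r c t u + (if u \in D t then deg r u else 0)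
                          = c u + #|[set v in D t | adj r v u]|) /\
  (forall i j, cell r i j -> (i \in D t -> j \notin D t -> T i j) /\
                             (j \in D t -> i \notin D t -> ~~ T i j)).

Lemma adjC u v : adj r u v = adj r v u.
Proof. by rewrite /adj orbC. Qed.

Lemma disj t : Inv t -> forall v, v \in blk r c t -> v \notin D t.
Proof.
move=> [I1 _] v; case: (posnP t) => [->|tp]; first by move=> _; rewrite D0 inE.
rewrite blk_unst // => /and3P [v0 _ dv]; apply/negP => vD.
have := I1 v v0; rewrite vD.
have : #|[set w in D t | adj r w v]| <= deg r v.
  rewrite /deg; apply: subset_leq_card; apply/subsetP => w; rewrite !inE adjC.
  by case/andP.
have := c_lt_deg v0; lia.
Qed.

Lemma cover (A B F : {set 'I_n.+1}) x : A \subset F -> B \subset F ->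
  [disjoint A & B] -> #|F| <= #|A| + #|B| -> x \in F -> (x \in A) || (x \in B).
Proof.
move=> AF BF dAB cF xF; apply/negPn/negP; rewrite negb_or => /andP [xA xB].
have : A :|: B \subset F :\ x.
  apply/subsetP => y; rewrite !inE => /orP [yA|yB].
    by rewrite (subsetP AF) // andbT; apply: contraNneq xA => <-.
  by rewrite (subsetP BF) // andbT; apply: contraNneq xB => <-.
move/subset_leq_card; rewrite cardsU (disjoint_setI0 dAB) cards0 subn0.
have := cardsD1 x F; rewrite xF; lia.
Qed.

Lemma uncov (A B F : {set 'I_n.+1}) : #|A| + #|B| < #|F| ->
  exists x, [/\ x \in F, x \notin A & x \notin B].
Proof.
move=> cF; case: (boolP (F \subset A :|: B)) => [/subset_leq_card|].
  by rewrite cardsU; lia.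
case/subsetPn => x xF; rewrite inE negb_or => /andP [? ?]; by exists x.
Qed.


Lemma Inv0 : Inv 0.
Proof.
rewrite /Inv D0; split.
  move=> u _ /=; rewrite inE addn0.
  suff -> : [set v in set0 | adj r v u] = set0 by rewrite cards0 addn0.
  by apply/setP => v; rewrite !inE.
by move=> i j _; rewrite !inE.
Qed.

Lemma inv_step t : Inv t -> Inv t.+1.
Proof.
move=> It; have dj := disj It; case: It => [I1 I3]; split.
- move=> u u0.
  have -> : cfg r c t.+1 u = (cfg r c t u - (if u \in blk r c t then deg r u else 0))
            + #|[set v in blk r c t | adj r v u]| by [].
  have -> : [set v in D t.+1 | adj r v u] =
            [set v in D t | adj r v u] :|: [set v in blk r c t | adj r v u].
    by apply/setP => v; rewrite DS !inE andb_orl.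
  rewrite cardsU.
  have -> : [set v in D t | adj r v u] :&: [set v in blk r c t | adj r v u] = set0.
    apply/setP => v; rewrite !inE; apply/negP => /andP [/andP [vD _] /andP [vb _]].
    by move: (dj v vb); rewrite inE vD.
  rewrite cards0 subn0 DS in_setU.
  have := I1 u u0.
  case: (boolP (u \in blk r c t)) => ub.
    have uD := dj u ub; rewrite (negbTE uD) /=.
    have : deg r u <= cfg r c t u.
      case: (posnP t) => tp.
        by move: ub; rewrite tp blk0 inE (negbTE u0).
      by move: ub; rewrite blk_unst // => /and3P [].
    lia.
  rewrite orbF; case: (u \in D t); lia.
- move=> i j cij; have /and3P [ri rj ij] := cij.
  have [I3a I3b] := I3 i j cij.
  rewrite !DS !in_setU !negb_or; split.
  + move=> /orP [iD|ib] /andP [jD jb]; first exact: I3a.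
    have := blk_par ib; case/orP => [/andP [/eqP t0 /eqP i0]|/and3P [tp i0 pt]].
      case: HEW => H1 _ _; move: cij; rewrite i0; apply: H1.
    have iD : i \notin D t by apply: dj.
    have := I1 i i0; rewrite (negbTE iD) addn0 => e.
    have unst : deg r i <= cfg r c t i by move: ib; rewrite blk_unst // => /and3P [].
    suff : (j \in [set u | cell r i u && T i u]) || (j \in [set v in D t | cell r i v]).
      by rewrite !inE cij /=; case/orP => // /andP [H _]; move: jD; rewrite inE H.
    apply: (@cover _ _ [set u | cell r i u]); last by rewrite inE.
    * by apply/subsetP => u; rewrite !inE => /andP [].
    * by apply/subsetP => u; rewrite !inE => /andP [].
    * rewrite -setI_eq0; apply/eqP/setP => v; rewrite !inE.
      apply/negP => /andP [/andP [civ Tiv] /andP [vD _]].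
      have vD' : v \in D t by rewrite inE.
      by have [_ H] := I3 i v civ; move: (H vD' iD); rewrite Tiv.
    * rewrite -deg_row // -c_row //.
      have -> : [set v in D t | cell r i v] = [set v in D t | adj r v i].
        by apply/setP => v; rewrite !inE adj_row.
      by rewrite -e.
  + move=> /orP [jD|jb] /andP [iD ib]; first exact: I3b.
    have := blk_par jb; case/orP => [/andP [/eqP t0 /eqP j0]|/and3P [tp j0 pt]].
      by move: rj; rewrite j0 r0.
    have jD : j \notin D t by apply: dj.
    have := I1 j j0; rewrite (negbTE jD) addn0 => e.
    have unst : deg r j <= cfg r c t j by move: jb; rewrite blk_unst // => /and3P [].
    suff : (i \in [set u | cell r u j && ~~ T u j]) || (i \in [set v in D t | cell r v j]).
      by rewrite !inE cij /=; case/orP => // /andP [H _]; move: iD; rewrite inE H.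
    apply: (@cover _ _ [set u | cell r u j]); last by rewrite inE.
    * by apply/subsetP => u; rewrite !inE => /andP [].
    * by apply/subsetP => u; rewrite !inE => /andP [].
    * rewrite -setI_eq0; apply/eqP/setP => v; rewrite !inE.
      apply/negP => /andP [/andP [cvj Tvj] /andP [vD _]].
      have vD' : v \in D t by rewrite inE.
      by have [H _] := I3 v j cvj; move: (H vD' jD); rewrite (negbTE Tvj).
    * rewrite -deg_col // -c_col //.
      have -> : [set v in D t | cell r v j] = [set v in D t | adj r v j].
        by apply/setP => v; rewrite !inE adj_col.
      by rewrite -e.
Qed.

Lemma InvT t : Inv t.
Proof. elim: t => [|t IH]; [exact: Inv0 | exact: inv_step]. Qed.


Lemma stuck (R C : {set 'I_n.+1}) :
  (forall u, u \in C -> exists i, [/\ i \in R, cell r i u & T i u]) ->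
  (forall i, i \in R -> exists u, [/\ u \in C, cell r i u & ~~ T i u]) ->
  R = set0.
Proof.
move: {2}#|R| (leqnn #|R|) => k; elim: k R C => [|k IH] R C.
  by rewrite leqn0 cards_eq0 => /eqP.
move=> cR H1 H2; apply/eqP; apply/negPn/negP => /set0Pn [i0 i0R].
case: (arg_minnP (fun i : 'I_n.+1 => val i) i0R) => im isR ismin.
set C' := [set u in C | cell r im u && ~~ T im u].
set R' := [set i in R | (i != im) &&
            [forall u, ((u \in C) && cell r i u && ~~ T i u) ==> (u \in C')]].
have key : forall u, u \in C' -> exists i, [/\ i \in R', cell r i u & T i u].
  move=> u; rewrite inE => /andP [uC /andP [cu Tu]].
  have [i1 [i1R c1 T1]] := H1 u uC; exists i1; split => //.
  rewrite inE i1R /=; apply/andP; split.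
    by apply: contraNneq Tu => <-; rewrite T1.
  apply/forallP => u1; apply/implyP => /andP [/andP [u1C c11] T11].
  rewrite inE u1C /=.
  have cis1 : cell r im u1.
    move: cu c11 (ismin i1 i1R); rewrite !cellE => /and3P [-> _ _] /and3P [_ -> h] h2.
    by rewrite /= (leq_ltn_trans h2 h).
  rewrite cis1 /=; apply/negP => Tis1.
  case: HEW => _ _ H3.
  apply: (H3 im i1 u u1 cu cis1 c1 c11).
  - by apply: contraNneq Tu => ->; rewrite T1.
  - by apply: contraNneq T11 => <-; rewrite T1.
  - by split; [apply/negbTE | apply/negbTE | |].
have R'0 : R' = set0.
  apply: (IH R' C') => //.
    have : R' \proper R.
      rewrite properE; apply/andP; split.
        by apply/subsetP => i; rewrite inE => /andP [].
      by apply/subsetPn; exists im => //; rewrite inE eqxx andbF.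
    move/proper_card; lia.
  move=> i; rewrite inE => /andP [iR /andP [_ /forallP F]].
  have [u [uC cu Tu]] := H2 i iR; exists u; split => //.
  by move: (F u); rewrite uC cu Tu.
have [u [uC cu Tu]] := H2 im isR.
have uC' : u \in C' by rewrite inE uC cu Tu.
by have [i [iR' _ _]] := key u uC'; move: iR'; rewrite R'0 inE.
Qed.


Lemma ord0_D t : 0 < t -> ord0 \in D t.
Proof.
move=> tp; apply: (subsetP (D_sub tp)).
by rewrite DS D0 blk0 set0U inE.
Qed.

Lemma progress t : odd t -> #|D t.+2| <= #|D t| -> D t = setT.
Proof.
move=> ot hc.
have tp : 0 < t by case: t ot hc.
have s01 : D t \subset D t.+1 by apply: D_sub; lia.
have s12 : D t.+1 \subset D t.+2 by apply: D_sub; lia.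
have eq2 : D t.+2 = D t.
  apply/eqP; rewrite eq_sym eqEcard hc andbT; by apply: D_sub; lia.
have nb0 : forall v, v \in blk r c t -> False.
  move=> v vb; have := disj (InvT t) vb.
  by rewrite -eq2 (subsetP s12) // DS in_setU vb orbT.
have nb1 : forall v, v \in blk r c t.+1 -> False.
  move=> v vb; have := disj (InvT t.+1) vb.
  by rewrite (subsetP s01) // -eq2 DS in_setU vb orbT.
have [I1 _] := InvT t; have [I1' I3'] := InvT t.+1.
set R := [set i | r i && (i \notin D t)].
set C := [set u | ~~ r u && (u \notin D t)].
have H1 : forall u, u \in C -> exists i, [/\ i \in R, cell r i u & T i u].
  move=> u; rewrite inE => /andP [ru uD].
  have u0 : u != ord0 by apply: contraNneq ru => ->; rewrite r0.
  have nu : ~~ (deg r u <= cfg r c t u).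
    apply/negP => h; apply: (nb0 u); rewrite blk_unst // u0 h ot ru //.
  have := I1 u u0; rewrite (negbTE uD) addn0 => e.
  have hlt : #|[set k | cell r k u && ~~ T k u]| + #|[set v in D t | cell r v u]| < #|[set k | cell r k u]|.
    rewrite -deg_col // -c_col //.
    have -> : [set v in D t | cell r v u] = [set v in D t | adj r v u].
      by apply/setP => v; rewrite !inE adj_col.
    lia.
  have [x [xF xA xB]] := uncov hlt.
  move: xF xA xB; rewrite !inE => cx; rewrite cx /= negbK => Tx xD.
  exists x; split => //; rewrite inE.
  move: cx xD; rewrite cellE inE => /and3P [-> _ _]; rewrite ?andbT //.
have H2 : forall i, i \in R -> exists u, [/\ u \in C, cell r i u & ~~ T i u].
  move=> i; rewrite inE => /andP [ri iD].
  have i0 : i != ord0 by apply: contraNneq iD => ->; rewrite ord0_D.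
  have iD1 : i \notin D t.+1 by apply: contra iD => h; rewrite -eq2 (subsetP s12).
  have nu : ~~ (deg r i <= cfg r c t.+1 i).
    apply/negP => h; apply: (nb1 i); rewrite blk_unst // i0 h /= ot ri //.
  have := I1' i i0; rewrite (negbTE iD1) addn0 => e.
  have hlt : #|[set k | cell r i k && T i k]| + #|[set v in D t.+1 | cell r i v]| < #|[set k | cell r i k]|.
    rewrite -deg_row // -c_row //.
    have -> : [set v in D t.+1 | cell r i v] = [set v in D t.+1 | adj r v i].
      by apply/setP => v; rewrite !inE adj_row.
    lia.
  have [x [xF xA xB]] := uncov hlt.
  move: xF xA xB; rewrite !inE => cx; rewrite cx /= => Tx xD.
  exists x; split => //; rewrite inE.
  move: cx; rewrite cellE => /and3P [_ -> _] /=.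
  apply: contraNN xD => h; have h' := subsetP s01 x h; rewrite inE /= in h'; by rewrite h'.
have R0 := stuck H1 H2.
apply/setP => v; rewrite [in RHS]inE; apply/negPn/negP => vD.
case rv: (r v).
  have : v \in R by rewrite [v \in R]inE rv vD.
  by rewrite R0 inE.
have vC : v \in C by rewrite [v \in C]inE rv vD.
by have [i [iR _ _]] := H1 v vC; move: iR; rewrite R0 inE.
Qed.

Lemma cntD m : D (2 * m).+1 = setT \/ m < #|D (2 * m).+1|.
Proof.
elim: m => [|m IH].
  by right; rewrite muln0 card_gt0; apply/set0Pn; exists ord0; rewrite ord0_D.
have -> : (2 * m.+1).+1 = ((2 * m).+1).+2 by rewrite mulnS.
case: IH => [H|H].
  left; apply/eqP; rewrite eqEsubset subsetT /= -H; by apply: D_sub; lia.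
case: (leqP #|D ((2 * m).+1).+2| #|D (2 * m).+1|) => h.
  have o : odd (2 * m).+1 by rewrite mul2n /= odd_double.
  have H' := progress o h.
  by left; apply/eqP; rewrite eqEsubset subsetT /= -H'; apply: D_sub; lia.
right; lia.
Qed.


Lemma allD v : v \in D (2 * n).+1.
Proof.
case: (cntD n) => [->|h]; first by rewrite inE.
apply/negPn/negP => vD.
have : D (2 * n).+1 \subset [set: 'I_n.+1] :\ v.
  apply/subsetP => w wD; rewrite !inE andbT; apply: contraNneq vD => <-.
  by [].
move/subset_leq_card; have := cardsD1 v [set: 'I_n.+1].
rewrite cardsT card_ord inE; lia.
Qed.

Definition tau := topTime r c.

Lemma tauD t v : t <= 2 * n.+2 -> (v \in D t) = (tau v < t).
Proof.
move=> tN; rewrite inE /tau /topTime.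
have -> : iota 0 (2 * n.+2) = iota 0 t ++ iota t (2 * n.+2 - t).
  by rewrite -{1}(subnKC tN) iotaD.
rewrite find_cat size_iota; case: ifP => h.
  by move: h; rewrite has_find size_iota => ->.
by rewrite ltnNge leq_addr.
Qed.

Lemma tau_lt v : tau v < (2 * n).+1.
Proof. by rewrite -tauD ?allD //; lia. Qed.

Lemma tau_blk v : v \in blk r c (tau v).
Proof.
have h : has (fun s => v \in blk r c s) (iota 0 (2 * n.+2)).
  rewrite has_find size_iota; have := tau_lt v; rewrite /tau /topTime; lia.
have := nth_find 0 h; rewrite nth_iota ?add0n //.
have := tau_lt v; rewrite /tau /topTime; lia.
Qed.

Lemma tau_par v : odd (tau v) = ~~ r v.
Proof.
have := blk_par (tau_blk v); case/orP => [/andP [/eqP -> /eqP ->]|/and3P [_ _ /eqP //]].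
by rewrite r0.
Qed.

Lemma tau0 : tau ord0 = 0.
Proof. have := ord0_D (ltn0Sn 0); rewrite tauD //; lia. Qed.

Lemma tau_pos v : v != ord0 -> 0 < tau v.
Proof.
move=> v0; have := blk_par (tau_blk v); case/orP => [/andP [_ /eqP e]|/and3P [// _ _]].
by move: v0; rewrite e eqxx.
Qed.

Lemma suppl_tau i j : suppl r T i j = (tau i < tau j).
Proof. by []. Qed.

Lemma suppl_cell i j : cell r i j -> suppl r T i j = T i j.
Proof.
move=> cij; have /and3P [ri rj _] := cij; rewrite suppl_tau.
have pi := tau_par i; have pj := tau_par j; rewrite ri in pi; rewrite rj in pj.
have ne : tau i != tau j by apply/eqP => e; move: pi; rewrite e pj.
have lti := tau_lt i; have ltj := tau_lt j.
case Tij: (T i j).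
  rewrite ltn_neqAle ne /=; rewrite leqNgt; apply/negP => h.
  have [_ I3] := InvT (tau j).+1; have [_ H] := I3 i j cij.
  have jD : j \in D (tau j).+1 by rewrite tauD //; lia.
  have iD : i \notin D (tau j).+1 by rewrite tauD; lia.
  by move: (H jD iD); rewrite Tij.
apply/negP => h.
have [_ I3] := InvT (tau i).+1; have [H _] := I3 i j cij.
have iD : i \in D (tau i).+1 by rewrite tauD //; lia.
have jD : j \notin D (tau i).+1 by rewrite tauD; lia.
by move: (H iD jD); rewrite Tij.
Qed.


Lemma tauN v : (tau v).+1 <= 2 * n.+2.
Proof. have := tau_lt v; clear; lia. Qed.

Lemma D_le v t : v \in D t -> t <= 2 * n.+2 -> tau v < t.
Proof. by move=> h tN; rewrite -tauD. Qed.

Lemma D_nle v t : v \notin D t -> t <= 2 * n.+2 -> t <= tau v.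
Proof. by move=> h tN; rewrite leqNgt -tauD. Qed.

Lemma inD_self v : v \in D (tau v).+1.
Proof. by rewrite tauD ?tauN. Qed.

Lemma notinD v t : t <= tau v -> v \notin D t.
Proof.
move=> h; rewrite tauD -?leqNgt //; apply: leq_trans (tauN v); apply: leq_trans h _; exact: leqnSn.
Qed.

Lemma pred_col b : ~~ r b -> exists a, [/\ cell r a b, T a b & (tau a).+1 = tau b].
Proof.
move=> rb; have pb := tau_par b; rewrite rb in pb.
case e1: (tau b == 1).
  exists ord0; split; first exact: cell0.
    by case: HEW => H1 _ _; apply: H1; apply: cell0.
  by rewrite tau0 (eqP e1).
have b0 : b != ord0 by apply: contraNneq rb => ->; rewrite r0.
have [s ss] : exists s, s.+2 = tau b.
  by exists (tau b).-2; move: pb e1; case: (tau b) => [|[|[|k]]].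
have sp : 0 < s by move: pb e1; rewrite -ss; case: s {ss} => [|k].
have os : odd s by move: pb; rewrite -ss /= negbK.
have nb : b \notin blk r c s.
  apply/negP => h; have : b \in D s.+1 by rewrite DS in_setU h orbT.
  by apply/negP; apply: notinD; rewrite -ss.
have nu : ~~ (deg r b <= cfg r c s b).
  apply: contra nb => h; rewrite blk_unst // b0 h os rb //.
have bD : b \notin D s by apply: notinD; rewrite -ss; apply: leqW.
have I1 := (InvT s).1.
have := I1 b b0; rewrite (negbTE bD) addn0 => e.
have hlt : #|[set k | cell r k b && ~~ T k b]| + #|[set v in D s | cell r v b]| < #|[set k | cell r k b]|.
  rewrite -deg_col // -c_col //.
  have -> : [set v in D s | cell r v b] = [set v in D s | adj r v b].
    by apply/setP => v; rewrite !inE adj_col.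
  by rewrite -e ltnNge.
have [x [xF xA xB]] := uncov hlt.
have cx : cell r x b by move: xF; rewrite inE.
have Tx : T x b by move: xA; rewrite inE cx negbK.
have xD : x \notin D s by apply: contra xB => h; rewrite [x \in [set _ in _ | _]]inE h cx.
exists x; split => //.
have H := (((InvT (tau b).+1).2) x b cx).2.
have xD1 : x \in D (tau b).+1.
  by apply/negPn/negP => h; move: (H (inD_self b) h); rewrite Tx.
have sN : s <= 2 * n.+2 by have := tauN b; rewrite -ss; clear; lia.
have h1 := D_nle xD sN.
have h2 := D_le xD1 (tauN b).
have /and3P [rx _ _] := cx.
have px := tau_par x; rewrite rx /= in px.
have n1 : tau x != s by apply/eqP => e'; move: px; rewrite e' os.
have n2 : tau x != s.+2 by apply/eqP => e'; move: px; rewrite e' ss pb.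
rewrite -ss; move: h1 h2 n1 n2; rewrite -ss; clear; lia.
Qed.

Lemma pred_row j : r j -> j != ord0 -> exists b, [/\ cell r j b, ~~ T j b & (tau b).+1 = tau j].
Proof.
move=> rj j0; have pj := tau_par j; rewrite rj /= in pj.
have tp := tau_pos j0.
have [s ss] : exists s, s.+2 = tau j.
  by exists (tau j).-2; move: pj tp; case: (tau j) => [|[|k]].
have os : ~~ odd s by move: pj; rewrite -ss /=; case: (odd s).
have [x [cx Tx xD]] : exists x, [/\ cell r j x, ~~ T j x & x \notin D s].
  case: (posnP s) => s0.
    case: HEW => _ H2 _; have [x /andP [cx Tx]] := H2 j rj j0.
    by exists x; split => //; rewrite s0 D0 inE.
  have nb : j \notin blk r c s.
    apply/negP => h; have : j \in D s.+1 by rewrite DS in_setU h orbT.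
    by apply/negP; apply: notinD; rewrite -ss.
  have nu : ~~ (deg r j <= cfg r c s j).
    apply: contra nb => h; rewrite blk_unst // j0 h rj /=; by case: (odd s) os.
  have jD : j \notin D s by apply: notinD; rewrite -ss; apply: leqW.
  have I1 := (InvT s).1.
  have := I1 j j0; rewrite (negbTE jD) addn0 => e.
  have hlt : #|[set k | cell r j k && T j k]| + #|[set v in D s | cell r j v]| < #|[set k | cell r j k]|.
    rewrite -deg_row // -c_row //.
    have -> : [set v in D s | cell r j v] = [set v in D s | adj r v j].
      by apply/setP => v; rewrite !inE adj_row.
    by rewrite -e ltnNge.
  have [x [xF xA xB]] := uncov hlt.
  have cx : cell r j x by move: xF; rewrite inE.
  have Tx : ~~ T j x by move: xA; rewrite inE cx.
  have xD : x \notin D s by apply: contra xB => h; rewrite [x \in [set _ in _ | _]]inE h cx.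
  by exists x.
exists x; split => //.
have H := (((InvT (tau j).+1).2) j x cx).1.
have xD1 : x \in D (tau j).+1.
  by apply/negPn/negP => h; move: (H (inD_self j) h); rewrite (negbTE Tx).
have sN : s <= 2 * n.+2 by have := tauN j; rewrite -ss; clear; lia.
have h1 := D_nle xD sN.
have h2 := D_le xD1 (tauN j).
have /and3P [_ rx _] := cx.
have px := tau_par x; rewrite rx /= in px.
have n1 : tau x != s by apply/eqP => e'; move: px; rewrite e' (negbTE os).
have n2 : tau x != s.+2 by apply/eqP => e'; move: px; rewrite e' ss pj.
move: h1 h2 n1 n2; rewrite -ss; clear; lia.
Qed.


Lemma tne i u : r i -> ~~ r u -> tau i != tau u.
Proof.
move=> ri ru; apply/eqP => e; have := tau_par i; have := tau_par u.
by rewrite e ri (negbTE ru) => ->.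
Qed.

Lemma main j k : cell r j k ->
  (cornersupport r T j k <->
   exists j' k', [/\ cell r j' k', j' != j, k' != k &
     if T j k == false then
       [/\ T j' k' = true, cell r j k', T j k' = false & suppl r T j' k = false]
     else
       [/\ T j' k' = false, cell r j' k, T j' k = true & suppl r T j k' = true]]).
Proof.
move=> cjk; have /and3P [rj rk jk] := cjk.
split.
- case=> j' [k' [[rj' rk' nj nk] [s1 s2 s3]]].
  move: rj' rk'; rewrite /isRow /isCol => rj' rk'.
  move: s1 s2 s3; rewrite !suppl_tau.
  case Tjk: (T j k) => /= s1 s2 s3.
  + have h1 : tau k' < tau j'.
      have := tne rj' rk'; move: s1; clear; case: ltngtP => //.
    have h2 : tau j' < tau k by [].
    have h3 : tau j < tau k' by [].
    have [a [cak Tak ea]] := pred_col rk.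
    have /and3P [ra _ _] := cak.
    have a0 : a != ord0.
      apply/eqP => e; move: ea; rewrite e tau0 => ea.
      move: h1 h2 ea; clear; lia.
    have [b [cab Tab eb]] := pred_row ra a0.
    have hb : tau j < tau b by move: h1 h2 h3 ea eb; clear; lia.
    have hab : tau b < tau a by move: eb; clear; lia.
    have hak : tau a < tau k by move: ea; clear; lia.
    exists a, b; split => //.
    * by apply/eqP => e; move: hb hab; rewrite e; clear; lia.
    * by apply/eqP => e; move: hab hak; rewrite e; clear; lia.
    * by split => //; apply/negbTE.
  + have h1 : tau j' < tau k' by move: s1; case: (tau j' < tau k').
    have h2 : tau k < tau j'.
      have := tne rj' rk; move: s2; clear; case: ltngtP => //.
    have h3 : tau k' < tau j.
      have := tne rj rk'; move: s3; clear; case: ltngtP => //.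
    have j0 : j != ord0.
      apply/eqP => e; case: HEW => H1 _ _; move: (H1 k); rewrite -e cjk Tjk.
      by move=> H; have := H isT.
    have [b [cjb Tjb eb]] := pred_row rj j0.
    have /and3P [_ rb _] := cjb.
    have [a [cab Tab ea]] := pred_col rb.
    have ha : tau k < tau a by move: h1 h2 h3 ea eb; clear; lia.
    have hab : tau a < tau b by move: ea; clear; lia.
    have hbj : tau b < tau j by move: eb; clear; lia.
    exists a, b; split => //.
    * by apply/eqP => e; move: hab hbj; rewrite e; clear; lia.
    * by apply/eqP => e; move: ha hab; rewrite e; clear; lia.
    * split => //; first exact/negbTE.
      by rewrite suppl_tau; apply/negbTE; rewrite -leqNgt ltnW.
- case=> a [b [cab naj nbk H]].
  have /and3P [ra rb _] := cab.
  exists a, b; split; first by [].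
  case Tjk: (T j k) H => /= [] [H1 H2 H3 H4].
  + by split; rewrite ?(suppl_cell cab) ?(suppl_cell H2) ?H1.
  + by split; rewrite ?(suppl_cell cab) ?(suppl_cell H2) ?H1 ?H3.
Qed.

End Pf.

Theorem corollary4p18 (n : nat) (r : 'I_n.+1 -> bool) (T : filling n)
  (j k : 'I_n.+1) :
  isFerrers r -> isEWtab r T -> cell r j k ->
  (cornersupport r T j k <->
   exists j' k', [/\ cell r j' k', j' != j, k' != k &
     if T j k == false then
       [/\ T j' k' = true, cell r j k', T j k' = false & suppl r T j' k = false]
     else
       [/\ T j' k' = false, cell r j' k, T j' k = true & suppl r T j k' = true]]).
Proof. by move=> HF HEW; apply: main. Qed.
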